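(* Let $s,t$ be real numbers with $t\ge s>0$. For every positive integer $n$, $M_n \geq t\, M_{n-1}$.
   Context: For a real number $s$, a positive integer $n$ and a set $P \subseteq \mathbb{R}$, $\mathcal{G}_s^{n\times n}(P)$ denotes the set of all $n\times n$ real upper Hessenberg matrices $A=(a_{ij})$ with $a_{i+1,i} = s$ for $1\le i\le n-1$, $a_{ij}=0$ for $i > j+1$, and $a_{ij}\in P$ for all $i \le j$. For $n\ge 1$, $M_n$ is the maximum of $|\det A|$ over $A\in\mathcal{G}_s^{n\times n}([0,t])$, and $M_0 := 1$. *)

(* Defs.v *)
From HB Require Import structures.
From mathcomp Require Import all_boot all_order all_algebra.
From mathcomp Require Import boolp classical_sets reals.
Set Implicit Arguments. Unset Strict Implicit. Unset Printing Implicit Defensive.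
Import Order.TTheory GRing.Theory Num.Theory.
Local Open Scope ring_scope.
Local Open Scope classical_set_scope.

(* Indices are 0-based ('I_n); a_{i+1,i} corresponds to
   val i = (val j).+1. *)
Definition hessG (R : realType) (s : R) (P : set R) (n : nat) : set 'M[R]_n :=
  [set A | forall i j : 'I_n,
      ((j.+1 < i)%N -> A i j = 0) /\
      ((i : nat) = j.+1 -> A i j = s) /\
      ((i <= j)%N -> P (A i j))].

(* M_n = max |det A| over A in G_s^{n x n}([0,t]) for n >= 1, M_0 = 1.
   The maximum exists (compact set, continuous function), so it equals the
   supremum, which is how we define it. *)
Definition interval0t (R : realType) (t : R) : set R := [set x : R | 0 <= x <= t].

Definition absdet (R : realType) (n : nat) (A : 'M[R]_n) : R := `|\det A|.

Definition Mn (R : realType) (s t : R) (n : nat) : R :=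
  match n with
  | 0 => 1
  | m.+1 => sup (@absdet R m.+1 @` @hessG R s (interval0t t) m.+1)
  end.

(* Main.v *)
Require Import Defs.
From HB Require Import structures.
From mathcomp Require Import all_boot all_order all_algebra.
From mathcomp Require Import boolp classical_sets reals.
From mathcomp Require Import fingroup perm zify.
Import Order.TTheory GRing.Theory Num.Theory.
Local Open Scope ring_scope.

Set Implicit Arguments. Unset Strict Implicit.
Section Aux.
Variable R : realType.
Variables s t : R.
Hypothesis s0 : 0 < s.
Hypothesis st : s <= t.

Lemma entry_bound n (A : 'M[R]_n) i j :
  hessG s (interval0t t) A -> `|A i j| <= t.
Proof.
move=> /(_ i j) [H1 [H2 H3]].
have t0 : 0 <= t by apply: le_trans st; exact: ltW.
case: (leqP i j) => [/H3 /andP[a b]|lt]; first by rewrite ger0_norm.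
case: (ltngtP j.+1 i) => [/H1 ->| |/esym /H2 ->]; first by rewrite normr0.
  by rewrite ltnS leqNgt lt.
by rewrite gtr0_norm.
Qed.

Lemma absdet_bound n (A : 'M[R]_n) :
  hessG s (interval0t t) A ->
  absdet A <= \sum_(p : 'S_n) \prod_(i < n) t.
Proof.
move=> hA; rewrite /absdet /determinant.
apply: le_trans (ler_norm_sum _ _ _) _.
apply: ler_sum => p _.
rewrite normrM normrX normrN1 expr1n mul1r normr_prod.
apply: ler_prod => i _; rewrite normr_ge0 /=; exact: entry_bound.
Qed.

Definition extB m (A : 'M[R]_m) : 'M[R]_m.+1 :=
  \matrix_(i, j) match unlift ord_max i, unlift ord_max j with
  | Some i', Some j' => A i' j'
  | None, None => t
  | None, Some j' => if (j'.+1 == m)%N then s else 0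
  | Some _, None => 0
  end.

Lemma extB_det m (A : 'M[R]_m) : \det (extB A) = t * \det A.
Proof.
rewrite (expand_det_col _ ord_max) (bigD1 ord_max) //= big1 ?addr0.
  rewrite /cofactor !mxE unlift_none addnn -mul2n exprM sqrrN expr1n expr1n mul1r.
  congr (_ * \det _); apply/matrixP => i j; rewrite !mxE !liftK //.
move=> i; case: (unliftP ord_max i) => [i'|] -> ni; last by rewrite eqxx in ni.
by rewrite !mxE unlift_none liftK mul0r.
Qed.

Lemma extB_hess m (A : 'M[R]_m) :
  hessG s (interval0t t) A -> hessG s (interval0t t) (extB A).
Proof.
have t0 : 0 <= t by apply: le_trans st; exact: ltW.
move=> hA i j; rewrite !mxE.
case: (unliftP ord_max i) => [i'|] ->; case: (unliftP ord_max j) => [j'|] ->;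
  rewrite ?lift_max /=.
- exact: hA.
- have lt : (i' < m)%N := ltn_ord i'; split=> //; split=> [E|_]; first by rewrite E in lt; lia.
  by rewrite /interval0t /= lexx t0.
- have lt : (j' < m)%N := ltn_ord j'; split; first by move=> ?; case: eqP => // ?; exfalso; lia.
  split; first by move=> E; have -> : (j'.+1 == m) by apply/eqP; exact: esym E.
  by move=> H; have := leq_ltn_trans H lt; rewrite ltnn.
- split; first by move=> ?; exfalso; lia.
  split; first by move=> ?; exfalso; lia.
  by move=> _; rewrite /interval0t /= lexx t0.
Qed.
End Aux.

Lemma hess_wit (R : realType) (s t : R) m : 0 < s -> s <= t ->
  hessG s (interval0t t) (\matrix_(i < m, j < m) if (i == j.+1 :> nat) then s else 0).
Proof.
move=> s0 st; have t0 : 0 <= t by apply: le_trans st; exact: ltW.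
move=> i j; rewrite !mxE; split.
  by move=> H; case: eqP => // E; rewrite E ltnn in H.
split; first by move=> ->; rewrite eqxx.
move=> H; case: eqP => [E|_]; first by rewrite E ltnn in H.
by rewrite /interval0t /= lexx t0.
Qed.

Local Open Scope classical_set_scope.
Lemma key (R : realType) (s t : R) m : 0 < s -> s <= t ->
  has_sup (@absdet R m.+1 @` @hessG R s (interval0t t) m.+1) /\
  forall A : 'M[R]_m, hessG s (interval0t t) A ->
    t * absdet A <= sup (@absdet R m.+1 @` @hessG R s (interval0t t) m.+1).
Proof.
move=> s0 st; have tp : 0 < t by apply: lt_le_trans st.
have H : forall A : 'M[R]_m, hessG s (interval0t t) A ->
    (@absdet R m.+1 @` @hessG R s (interval0t t) m.+1) (t * absdet A).
  move=> A hA; exists (extB s t A); first exact: extB_hess.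
  by rewrite /absdet extB_det normrM gtr0_norm.
have hs : has_sup (@absdet R m.+1 @` @hessG R s (interval0t t) m.+1).
  split; first by eexists; apply: H; apply: hess_wit.
  exists (\sum_(p : 'S_m.+1) \prod_(i < m.+1) t) => x [B hB <-].
  exact: absdet_bound hB.
split=> // A hA; apply: sup_upper_bound => //; exact: H.
Qed.

Theorem lemma3p1 (R : realType) (s t : R) (n : nat) :
  0 < s -> s <= t -> (0 < n)%N -> t * Mn s t n.-1 <= Mn s t n.
Proof.
move=> s0 st; case: n => // m _ /=.
have tp : 0 < t by apply: lt_le_trans st.
have [hs hk] := @key _ _ _ m s0 st.
case: m hs hk => [|k] hs hk /=.
  have := hk _ (hess_wit s0 st).
  by rewrite /absdet det_mx00 normr1.
rewrite mulrC -ler_pdivlMr //; apply: ge_sup.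
  by eexists; exists (\matrix_(i < k.+1, j < k.+1) if (i == j.+1 :> nat) then s else 0); first exact: hess_wit.
move=> x [A hA <-]; rewrite ler_pdivlMr // mulrC; exact: hk.
Qed.
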